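(* Let $a>0$ and $\phi_a(x)=e^{-ax^2}$. There is a constant $C>0$ (depending only on $a$) such that every $f=\sum_{k\in\mathbb{Z}}c_k\phi_a(\cdot-k)$ with $c\in\ell^\infty(\mathbb{Z})$ possesses an extension to an entire function satisfying $|f(x+iy)|\le C\|c\|_\infty e^{ay^2}$ for all $x,y\in\mathbb{R}$. *)

(* Defs.v *)
From Stdlib Require Import Reals ZArith.
From Coquelicot Require Import Coquelicot.
Open Scope R_scope.

Definition phi (a x : R) : R := exp (- a * x ^ 2).

Definition linf_bounded (c : Z -> C) : Prop :=
  exists M : R, forall k : Z, Cmod (c k) <= M.

Definition linf_norm (c : Z -> C) : R :=
  real (Lub_Rbar (fun r => exists k : Z, r = Cmod (c k))).

(* symmetric partial sum  sum_{k=-N}^{N} c_k phi_a(x - k) *)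
Definition gauss_partial (a : R) (c : Z -> C) (x : R) (N : nat) : C :=
  sum_n_m (G := C_AbelianMonoid)
    (fun j : nat =>
       let k := (Z.of_nat j - Z.of_nat N)%Z in
       Cmult (c k) (RtoC (phi a (x - IZR k)))) 0 (2 * N).

(* f(x) = sum_{k in Z} c_k phi_a(x - k) has value v at x (the series converges
   absolutely for bounded c, so symmetric partial sums determine its value) *)
Definition gauss_series_value (a : R) (c : Z -> C) (x : R) (v : C) : Prop :=
  filterlim (gauss_partial a c x) eventually (locally v).

Definition entire (F : C -> C) : Prop :=
  forall z : C, ex_derive (K := C_AbsRing) (V := C_NormedModule) F z.

(* Main.v *)
Require Import Defs.
From Stdlib Require Import Reals ZArith.
From Coquelicot Require Import Coquelicot.
Open Scope R_scope.
From Stdlib Require Import Lra Lia.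

Lemma Rmult_le_0_l_aux2 a b : 0 <= a -> b <= 0 -> a * b <= 0.
Proof. intros; nra. Qed.

Lemma L_exp1 x : Rabs (exp x - 1) <= Rabs x * exp (Rabs x).
Proof.
  destruct (Rle_or_lt 0 x) as [Hx|Hx].
  - rewrite (Rabs_pos_eq x Hx).
    pose proof (exp_ineq1_le x). pose proof (exp_ineq1_le (-x)).
    rewrite Rabs_pos_eq by lra.
    assert (exp (-x) * exp x = 1) by (rewrite <- exp_plus; replace (-x+x) with 0 by ring; apply exp_0).
    pose proof (exp_pos x).
    nra.
  - rewrite (Rabs_left x Hx).
    pose proof (exp_ineq1_le x). pose proof (exp_ineq1_le (-x)).
    assert (exp x < 1) by (rewrite <- exp_0; apply exp_increasing; lra).
    rewrite Rabs_left by lra.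
    pose proof (exp_pos (-x)). nra.
Qed.

Lemma L_exp2 x : Rabs (exp x - 1 - x) <= x^2 * exp (Rabs x).
Proof.
  pose proof (exp_ineq1_le x).
  rewrite Rabs_pos_eq by lra.
  destruct (Rle_or_lt 0 x) as [Hx|Hx].
  - rewrite (Rabs_pos_eq x Hx).
    pose proof (exp_ineq1_le (-x)).
    assert (exp (-x) * exp x = 1) by (rewrite <- exp_plus; replace (-x+x) with 0 by ring; apply exp_0).
    pose proof (exp_pos x).
    destruct (Rle_or_lt 1 x).
    + assert (0 <= (x^2 - 1) * exp x) by (apply Rmult_le_pos; nra). nra.
    + assert (exp x * (1 - x) <= 1) by nra.
      assert (x * (exp x - 1 - x * exp x) <= 0) by (apply Rmult_le_0_l_aux2; lra). nra.
  - rewrite (Rabs_left x Hx).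
    pose proof (exp_ineq1_le (-x)).
    assert (exp (-x) * exp x = 1) by (rewrite <- exp_plus; replace (-x+x) with 0 by ring; apply exp_0).
    pose proof (exp_pos x).
    (* exp x <= 1 - x + x^2 since (1 - x)(1 - x + x^2) >= 1 *)
    assert (exp x * (1 - x) <= 1) by nra.
    assert (1 <= (1 - x) * (1 - x + x^2)) by nra.
    assert (exp x <= 1 - x + x^2).
    { assert (exp x * (1-x) <= (1 - x + x^2) * (1 - x)) by nra.
      apply Rmult_le_reg_r with (1-x); lra. }
    assert (1 <= exp (-x)) by lra.
    assert (exp x <= 1) by nra.
    assert (x^2 * exp x >= x^2 * exp x) by lra.
    nra.
Qed.

Lemma exp_le_exp x y : x <= y -> exp x <= exp y.
Proof. intros [H|H]; [left; apply exp_increasing; exact H | subst; lra]. Qed.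

Lemma sin_small y : 0 <= y <= 1 -> y - y^3/6 <= sin y <= y.
Proof.
  intros Hy. assert (H1: y <= PI) by (pose proof PI2_1; pose proof PI2_Rlt_PI; lra).
  destruct (SIN y (proj1 Hy) H1) as [A B].
  assert (F3: INR (fact 3) = 6) by (rewrite INR_IZR_INZ; reflexivity).
  assert (F5: INR (fact 5) = 120) by (rewrite INR_IZR_INZ; reflexivity).
  assert (F7: INR (fact 7) = 5040) by (rewrite INR_IZR_INZ; reflexivity).
  assert (F9: INR (fact 9) = 362880) by (rewrite INR_IZR_INZ; reflexivity).
  assert (F1: INR (fact 1) = 1) by (rewrite INR_IZR_INZ; reflexivity).
  unfold sin_lb, sin_ub, sin_approx in *. cbn [sum_f_R0] in A, B. unfold sin_term in A, B.
  change (2*0+1)%nat with 1%nat in *. change (2*1+1)%nat with 3%nat in *.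
  change (2*2+1)%nat with 5%nat in *. change (2*3+1)%nat with 7%nat in *.
  change (2*4+1)%nat with 9%nat in *.
  rewrite ?F1, ?F3, ?F5, ?F7, ?F9 in A, B.
  assert (P3: 0 <= y^3) by (apply pow_le; lra).
  assert (P5: 0 <= y^5) by (apply pow_le; lra).
  assert (P7: 0 <= y^7) by (apply pow_le; lra).
  assert (y^2 <= 1) by nra.
  assert (y^5 <= y^3) by (replace (y^5) with (y^3*y^2) by ring; nra).
  assert (y^7 <= y^5) by (replace (y^7) with (y^5*y^2) by ring; nra).
  assert (y^9 <= y^7) by (replace (y^9) with (y^7*y^2) by ring; nra).
  rewrite F9 in B.
  assert (A' : y - y^3/6 + y^5/120 - y^7/5040 <= sin y) by (eapply Rle_trans; [|exact A]; right; field).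
  assert (B' : sin y <= y - y^3/6 + y^5/120 - y^7/5040 + y^9/362880) by (eapply Rle_trans; [exact B|]; right; field).
  split; lra.
Qed.

Lemma L_sin_pos y : 0 <= y -> Rabs (sin y) <= y /\ Rabs (sin y - y) <= 2 * y^2.
Proof.
  intros Hy. destruct (Rle_or_lt y 1) as [H|H].
  - destruct (sin_small y (conj Hy H)) as [A B].
    assert (y^2 <= y) by nra.
    assert (y^3 <= y^2) by (replace (y^3) with (y^2*y) by ring; assert (0<= y^2) by nra; nra).
    assert (0 <= y^3) by (apply pow_le; lra).
    split; unfold Rabs; repeat destruct Rcase_abs; lra.
  - pose proof (SIN_bound y). split; unfold Rabs; repeat destruct Rcase_abs; nra.
Qed.

Lemma L_sin1 y : Rabs (sin y) <= Rabs y.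
Proof.
  destruct (Rle_or_lt 0 y).
  - rewrite (Rabs_pos_eq y) by lra. apply L_sin_pos; lra.
  - rewrite (Rabs_left y) by lra.
    replace y with (- (-y)) by ring. rewrite sin_neg, Rabs_Ropp.
    replace (- - - y) with (-y) by ring. apply L_sin_pos; lra.
Qed.

Lemma L_sin2 y : Rabs (sin y - y) <= 2 * y^2.
Proof.
  destruct (Rle_or_lt 0 y).
  - apply L_sin_pos; lra.
  - replace y with (- (-y)) by ring. rewrite sin_neg.
    replace (- sin (- y) - - - y) with (- (sin (-y) - (-y))) by ring.
    rewrite Rabs_Ropp. replace ((- - y)^2) with ((-y)^2) by ring. apply L_sin_pos; lra.
Qed.

Lemma L_cos y : Rabs (cos y - 1) <= 2 * y^2.
Proof.
  pose proof (COS_bound y).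
  destruct (Rle_or_lt (Rabs y) 1) as [Hy|Hy].
  - assert (Hb: - PI/2 <= y <= PI/2).
    { pose proof PI2_1. unfold Rabs in Hy; destruct Rcase_abs; split; lra. }
    destruct (COS y (proj1 Hb) (proj2 Hb)) as [A B].
    assert (F2: INR (fact 2) = 2) by (rewrite INR_IZR_INZ; reflexivity).
    assert (F4: INR (fact 4) = 24) by (rewrite INR_IZR_INZ; reflexivity).
    assert (F6: INR (fact 6) = 720) by (rewrite INR_IZR_INZ; reflexivity).
    assert (F0: INR (fact 0) = 1) by (rewrite INR_IZR_INZ; reflexivity).
    unfold cos_lb, cos_approx in A. cbn [sum_f_R0] in A. unfold cos_term in A.
    change (2*0)%nat with 0%nat in A. change (2*1)%nat with 2%nat in A.
    change (2*2)%nat with 4%nat in A. change (2*3)%nat with 6%nat in A.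
    rewrite ?F0, ?F2, ?F4, ?F6 in A.
    assert (A' : 1 - y^2/2 + y^4/24 - y^6/720 <= cos y) by (eapply Rle_trans; [|exact A]; right; field).
    assert (y^2 <= 1) by (unfold Rabs in Hy; destruct Rcase_abs; nra).
    assert (0 <= y^6) by (replace (y^6) with ((y^3)^2) by ring; apply pow2_ge_0).
    assert (y^4 <= y^2) by (assert (0 <= y^2) by nra; nra).
    rewrite Rabs_left1 by lra. simpl in *. nra.
  - assert (1 <= y^2) by (unfold Rabs in Hy; destruct Rcase_abs; nra).
    unfold Rabs; destruct Rcase_abs; lra.
Qed.

Definition cexp (z : C) : C := (exp (fst z) * cos (snd z), exp (fst z) * sin (snd z)).

Lemma cexp_add z w : cexp (z + w)%C = (cexp z * cexp w)%C.
Proof.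
  destruct z as [x y], w as [u v]. unfold cexp, Cplus, Cmult; simpl.
  rewrite exp_plus, cos_plus, sin_plus. f_equal; ring.
Qed.

Lemma Cmod_cexp z : Cmod (cexp z) = exp (fst z).
Proof.
  destruct z as [x y]. unfold cexp, Cmod. cbn [fst snd].
  replace ((exp x * cos y) ^ 2 + (exp x * sin y) ^ 2) with (exp x ^ 2 * (Rsqr (sin y) + Rsqr (cos y)))
    by (unfold Rsqr; ring).
  rewrite sin2_cos2, Rmult_1_r.
  apply sqrt_pow2. left; apply exp_pos.
Qed.

Lemma cexp_R r : cexp (r, 0) = RtoC (exp r).
Proof. unfold cexp, RtoC; simpl. rewrite cos_0, sin_0. f_equal; ring. Qed.

Lemma Cmod_le_abs a b : Cmod (a, b) <= Rabs a + Rabs b.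
Proof.
  unfold Cmod; cbn [fst snd].
  rewrite <- (sqrt_pow2 (Rabs a + Rabs b)) by (pose proof (Rabs_pos a); pose proof (Rabs_pos b); lra).
  apply sqrt_le_1_alt.
  pose proof (Rabs_pos a); pose proof (Rabs_pos b).
  rewrite <- (pow2_abs a), <- (pow2_abs b). nra.
Qed.

Lemma fst_le_Cmod z : Rabs (fst z) <= Cmod z.
Proof. pose proof (Rmax_Cmod z). pose proof (Rmax_l (Rabs (fst z)) (Rabs (snd z))). lra. Qed.
Lemma snd_le_Cmod z : Rabs (snd z) <= Cmod z.
Proof. pose proof (Rmax_Cmod z). pose proof (Rmax_r (Rabs (fst z)) (Rabs (snd z))). lra. Qed.

Lemma cexp_quad w : Cmod (cexp w - 1 - w)%C <= 5 * Cmod w ^ 2 * exp (Cmod w).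
Proof.
  destruct w as [x y].
  assert (E : (cexp (x, y) - 1 - (x, y))%C = (exp x * cos y - 1 - x, exp x * sin y - y)).
  { unfold cexp, Cminus, Cplus, Copp, RtoC; simpl. f_equal; ring. }
  rewrite E. eapply Rle_trans; [apply Cmod_le_abs|].
  pose proof (fst_le_Cmod (x,y)) as Hx. pose proof (snd_le_Cmod (x,y)) as Hy. simpl in Hx, Hy.
  assert (HM : Cmod (x,y) ^ 2 = x^2 + y^2) by (rewrite Cmod2_alt; reflexivity).
  set (M := Cmod (x,y)) in *.
  assert (Hex : exp x <= exp (Rabs x)) by (apply exp_le_exp; apply Rle_abs).
  assert (HeM : exp (Rabs x) <= exp M) by (apply exp_le_exp; lra).
  pose proof (exp_pos x). pose proof (exp_pos (Rabs x)).
  pose proof (L_exp1 x). pose proof (L_exp2 x). pose proof (L_sin1 y). pose proof (L_sin2 y). pose proof (L_cos y).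
  assert (R1 : Rabs (exp x * cos y - 1 - x) <= 2 * exp (Rabs x) * (x^2 + y^2)).
  { replace (exp x * cos y - 1 - x) with ((exp x - 1 - x) + exp x * (cos y - 1)) by ring.
    eapply Rle_trans; [apply Rabs_triang|]. rewrite Rabs_mult, (Rabs_pos_eq (exp x)) by lra.
    assert (exp x * Rabs (cos y - 1) <= exp (Rabs x) * (2 * y^2)) by (apply Rmult_le_compat; try lra; apply Rabs_pos).
    assert (0 <= x^2) by nra. assert (0 <= y^2) by nra. nra. }
  assert (R2 : Rabs (exp x * sin y - y) <= 3 * exp (Rabs x) * (x^2 + y^2)).
  { replace (exp x * sin y - y) with ((exp x - 1) * sin y + (sin y - y)) by ring.
    eapply Rle_trans; [apply Rabs_triang|]. rewrite Rabs_mult.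
    assert (Rabs (exp x - 1) * Rabs (sin y) <= (Rabs x * exp (Rabs x)) * Rabs y)
      by (apply Rmult_le_compat; try apply Rabs_pos; lra).
    assert (Rabs x * Rabs y <= x^2 + y^2).
    { rewrite <- (pow2_abs x), <- (pow2_abs y). pose proof (Rabs_pos x); pose proof (Rabs_pos y). nra. }
    assert (Rabs x * exp (Rabs x) * Rabs y <= exp (Rabs x) * (x^2+y^2)) by nra.
    assert (1 <= exp (Rabs x)) by (rewrite <- exp_0; apply exp_le_exp; apply Rabs_pos).
    assert (0 <= x^2) by nra. assert (0 <= y^2) by nra. nra. }
  assert (0 <= x^2 + y^2) by nra.
  assert (exp (Rabs x) * (x^2+y^2) <= exp M * M^2) by (rewrite HM; apply Rmult_le_compat; lra).
  lra.
Qed.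

Definition Tsym {G : AbelianMonoid} (t : Z -> G) (n : nat) : G :=
  match n with O => t 0%Z | S _ => plus (t (Z.of_nat n)) (t (- Z.of_nat n)%Z) end.

Lemma sym_sum {G : AbelianMonoid} (t : Z -> G) (N : nat) :
  sum_n_m (fun j : nat => t (Z.of_nat j - Z.of_nat N)%Z) 0 (2 * N) = sum_n (Tsym t) N.
Proof.
  induction N as [|N IH].
  - simpl. rewrite sum_n_n. unfold sum_n. rewrite sum_n_n. reflexivity.
  - rewrite sum_Sn.
    replace (2 * S N)%nat with (S (S (2 * N))) by lia.
    rewrite sum_Sn_m by lia. rewrite sum_n_Sm by lia.
    rewrite <- sum_n_m_S.
    rewrite (sum_n_m_ext _ (fun j : nat => t (Z.of_nat j - Z.of_nat N)%Z)).
    2: { intros j. f_equal. lia. }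
    rewrite IH. simpl Tsym.
    replace (Z.of_nat 0 - Z.of_nat (S N))%Z with (- Z.of_nat (S N))%Z by lia.
    replace (Z.of_nat (S (S (2 * N))) - Z.of_nat (S N))%Z with (Z.of_nat (S N)) by lia.
    rewrite (plus_comm (t (- Z.of_nat (S N))%Z)).
    rewrite <- !plus_assoc. reflexivity.
Qed.

Definition cconv (u : nat -> C) (l : C) := filterlim u eventually (locally l).

Lemma cconv_of_comp (u : nat -> C) (x y : R) :
  is_lim_seq (fun n => fst (u n)) x -> is_lim_seq (fun n => snd (u n)) y -> cconv u (x, y).
Proof.
  intros Hx Hy P [eps HP].
  assert (A : eventually (fun n => ball x eps (fst (u n)))).
  { apply Hx. apply (locally_ball x eps). }
  assert (B : eventually (fun n => ball y eps (snd (u n)))).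
  { apply Hy. apply (locally_ball y eps). }
  unfold filtermap. generalize (filter_and _ _ A B). apply filter_imp.
  intros n [H1 H2]. apply HP. split; assumption.
Qed.

Lemma cconv_plus u v l m : cconv u l -> cconv v m -> cconv (fun n => u n + v n)%C (l + m)%C.
Proof.
  intros Hu Hv.
  exact (filterlim_comp_2 (F := eventually) u v (fun a b => @plus C_NormedModule a b) Hu Hv
           (filterlim_plus (K := C_AbsRing) (V := C_NormedModule) l m)).
Qed.

Lemma cconv_scal (k : C) u l : cconv u l -> cconv (fun n => k * u n)%C (k * l)%C.
Proof.
  intros Hu.
  exact (filterlim_comp _ _ _ u _ eventually (locally l) _ Hu (filterlim_scal_r (K := C_AbsRing) (V := C_NormedModule) k l)).
Qed.

Lemma cconv_const (l : C) : cconv (fun _ => l) l.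
Proof. apply filterlim_const. Qed.

Lemma cconv_opp u l : cconv u l -> cconv (fun n => - u n)%C (- l)%C.
Proof.
  intros Hu.
  replace (- l)%C with (RtoC (-1) * l)%C by (unfold RtoC, Cmult, Copp; simpl; f_equal; ring).
  apply (filterlim_ext (fun n => RtoC (-1) * u n)%C).
  { intros n. unfold RtoC, Cmult, Copp; simpl; f_equal; ring. }
  apply cconv_scal; exact Hu.
Qed.

Lemma cconv_minus u v l m : cconv u l -> cconv v m -> cconv (fun n => u n - v n)%C (l - m)%C.
Proof. intros; apply cconv_plus; [|apply cconv_opp]; assumption. Qed.

Lemma cconv_le u l B : cconv u l -> (forall n, Cmod (u n) <= B) -> Cmod l <= B.
Proof.
  intros Hu HB.
  destruct (Rle_or_lt (Cmod l) B) as [H|H]; [exact H|exfalso].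
  assert (He : 0 < (Cmod l - B) / 2 / sqrt 2).
  { apply Rdiv_lt_0_compat; [lra| apply sqrt_lt_R0; lra]. }
  destruct (Hu (ball l (mkposreal _ He)) (locally_ball l (mkposreal _ He))) as [N HN].
  specialize (HN N (Nat.le_refl N)).
  pose proof (C_NormedModule_mixin_compat2 l (u N) (mkposreal _ He) HN) as H2.
  simpl in H2.
  replace (sqrt 2 * ((Cmod l - B) / 2 / sqrt 2)) with ((Cmod l - B)/2) in H2
    by (field; apply Rgt_not_eq, sqrt_lt_R0; lra).
  specialize (HB N).
  assert (Cmod l <= Cmod (u N) + Cmod (minus (u N) l)).
  { replace l with (u N + - (minus (u N) l))%C at 1
      by (unfold minus, plus, opp; simpl; unfold Cplus, Copp; simpl; destruct (u N), l; simpl; f_equal; ring).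
    eapply Rle_trans; [apply Cmod_triangle|]. rewrite Cmod_opp. lra. }
  change (@minus (NormedModuleAux.AbelianGroup C_AbsRing C_NormedModuleAux) (u N) l) with (@minus C_AbelianGroup (u N) l) in H2. lra.
Qed.

Definition climit (u : nat -> C) : C :=
  (real (Lim_seq (fun n => fst (u n))), real (Lim_seq (fun n => snd (u n)))).

Lemma fst_sum_n (f : nat -> C) N : fst (sum_n f N) = sum_n (fun n => fst (f n)) N.
Proof.
  induction N as [|N IH].
  - rewrite !sum_O. reflexivity.
  - rewrite !sum_Sn, <- IH. reflexivity.
Qed.

Lemma snd_sum_n (f : nat -> C) N : snd (sum_n f N) = sum_n (fun n => snd (f n)) N.
Proof.
  induction N as [|N IH].
  - rewrite !sum_O. reflexivity.
  - rewrite !sum_Sn, <- IH. reflexivity.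
Qed.

Lemma exp_nat a n : exp (- a * INR n) = exp (- a) ^ n.
Proof.
  induction n as [|n IH].
  - simpl. replace (-a*0) with 0 by ring. apply exp_0.
  - rewrite S_INR. replace (-a * (INR n + 1)) with (-a * INR n + -a) by ring.
    rewrite exp_plus, IH. simpl. ring.
Qed.

Lemma Tsym_bound a B (t : Z -> C) :
  (forall k, Cmod (t k) <= B * exp (- a * Rabs (IZR k))) ->
  forall n, Cmod (Tsym t n) <= 2 * B * exp (- a) ^ n.
Proof.
  intros H n.
  assert (HB : 0 <= B).
  { specialize (H 0%Z). rewrite Rabs_R0, Rmult_0_r, exp_0, Rmult_1_r in H.
    pose proof (Cmod_ge_0 (t 0%Z)). lra. }
  destruct n as [|n].
  - simpl. specialize (H 0%Z). rewrite Rabs_R0, Rmult_0_r, exp_0, Rmult_1_r in H. lra.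
  - unfold Tsym.
    change (@plus C_AbelianMonoid) with Cplus.
    eapply Rle_trans; [apply Cmod_triangle|].
    pose proof (H (Z.of_nat (S n))) as H1. pose proof (H (- Z.of_nat (S n))%Z) as H2.
    rewrite opp_IZR, Rabs_Ropp in H2.
    rewrite <- INR_IZR_INZ, Rabs_pos_eq in H1, H2 by apply pos_INR.
    rewrite exp_nat in H1, H2. lra.
Qed.

Lemma geom_ex a B : 0 < a -> ex_series (fun n => 2 * B * exp (- a) ^ n).
Proof.
  intros Ha.
  apply (ex_series_ext (fun n => scal (2 * B) (exp (-a) ^ n))).
  { intros n. reflexivity. }
  apply (ex_series_scal_l (K:=R_AbsRing) (V:=R_NormedModule) (2*B) (fun n => exp (-a) ^ n)). apply ex_series_geom.
  rewrite Rabs_pos_eq by (left; apply exp_pos).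
  rewrite <- exp_0. apply exp_increasing. lra.
Qed.

Lemma comp_conv a B (g : nat -> R) : 0 < a ->
  (forall n, Rabs (g n) <= 2 * B * exp (- a) ^ n) ->
  is_lim_seq (sum_n g) (Series g).
Proof.
  intros Ha Hg.
  assert (E : ex_series g).
  { apply (ex_series_le (K := R_AbsRing) (V := R_CompleteNormedModule) g (fun n => 2 * B * exp (- a) ^ n)).
    - intros n. exact (Hg n).
    - apply geom_ex; exact Ha. }
  exact (Series_correct g E).
Qed.

Lemma conv_Tsym a B (t : Z -> C) : 0 < a ->
  (forall k, Cmod (t k) <= B * exp (- a * Rabs (IZR k))) ->
  cconv (fun N => sum_n (Tsym t) N) (climit (fun N => sum_n (Tsym t) N)).
Proof.
  intros Ha H.
  pose proof (Tsym_bound a B t H) as HT.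
  assert (H1 : is_lim_seq (fun N => fst (sum_n (Tsym t) N)) (Series (fun n => fst (Tsym t n)))).
  { apply (is_lim_seq_ext (sum_n (fun n => fst (Tsym t n)))).
    { intros N. rewrite fst_sum_n. reflexivity. }
    apply (comp_conv a B). exact Ha. intros n. eapply Rle_trans; [apply fst_le_Cmod| apply HT]. }
  assert (H2 : is_lim_seq (fun N => snd (sum_n (Tsym t) N)) (Series (fun n => snd (Tsym t n)))).
  { apply (is_lim_seq_ext (sum_n (fun n => snd (Tsym t n)))).
    { intros N. rewrite snd_sum_n. reflexivity. }
    apply (comp_conv a B). exact Ha. intros n. eapply Rle_trans; [apply snd_le_Cmod| apply HT]. }
  unfold climit. rewrite (is_lim_seq_unique _ _ H1), (is_lim_seq_unique _ _ H2).
  simpl. apply cconv_of_comp; assumption.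
Qed.

Definition Pq (a : R) (k : Z) (z : C) : C := (RtoC (-a) * ((z - RtoC (IZR k)) * (z - RtoC (IZR k))))%C.
Definition Ek a k z := cexp (Pq a k z).
Definition tF a (c : Z -> C) z k := (c k * Ek a k z)%C.
Definition tD a (c : Z -> C) z k := (c k * (RtoC (-a) * (RtoC 2 * (z - RtoC (IZR k)))) * Ek a k z)%C.
Definition Kz a (z : C) := exp (a * (snd z)^2 + 4 * a * Rabs (snd z) + 9 * a + a * Rabs (fst z)).

Lemma Cmod_Ek a k x y : Cmod (Ek a k (x,y)) = exp (- a * ((x - IZR k)^2 - y^2)).
Proof.
  unfold Ek. rewrite Cmod_cexp. f_equal. unfold Pq, RtoC, Cminus, Cplus, Copp, Cmult; simpl. ring.
Qed.

Lemma Cmod_sub_k x y k : Cmod ((x,y) - RtoC (IZR k))%C <= Rabs (x - IZR k) + Rabs y.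
Proof.
  replace ((x,y) - RtoC (IZR k))%C with (x - IZR k, y)
    by (unfold RtoC, Cminus, Cplus, Copp; simpl; f_equal; ring).
  apply Cmod_le_abs.
Qed.

Lemma KB a z k : 0 < a ->
  Cmod (Ek a k z) * exp (2 * (2 * a * Cmod (z - RtoC (IZR k)) + a)) <= Kz a z * exp (- a * Rabs (IZR k)).
Proof.
  intros Ha. destruct z as [x y]. rewrite Cmod_Ek. unfold Kz; simpl fst; simpl snd.
  rewrite <- !exp_plus. apply exp_le_exp.
  pose proof (Cmod_sub_k x y k) as H1.
  set (s := Rabs (x - IZR k)) in *.
  assert (Hs : (x - IZR k)^2 = s^2) by (unfold s; rewrite <- (pow2_abs (x - IZR k)); reflexivity).
  assert (Hk : Rabs (IZR k) <= Rabs x + s).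
  { unfold s. replace (IZR k) with (x - (x - IZR k)) at 1 by ring.
    eapply Rle_trans; [apply Rabs_triang|]. rewrite Rabs_Ropp. lra. }
  pose proof (Rabs_pos y). pose proof (Rabs_pos x). assert (0 <= s) by apply Rabs_pos.
  assert (Q : s^2 - 5 * s + 7 >= 0) by (pose proof (pow2_ge_0 (s - 5/2)); nra).
  assert (a * (s^2 - 5*s + 7) >= 0) by (apply Rle_ge, Rmult_le_pos; lra).
  assert (a * Cmod ((x, y) - RtoC (IZR k))%C <= a * (s + Rabs y)) by (apply Rmult_le_compat_l; lra).
  assert (a * Rabs (IZR k) <= a * (Rabs x + s)) by (apply Rmult_le_compat_l; lra).
  rewrite Hs. nra.
Qed.

Lemma Cmod_RtoC r : Cmod (RtoC r) = Rabs r.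
Proof. apply Cmod_R. Qed.

Lemma bound_tF a c z k L : 0 < a -> Cmod (c k) <= L ->
  Cmod (tF a c z k) <= (L * Kz a z) * exp (- a * Rabs (IZR k)).
Proof.
  intros Ha Hc. unfold tF. rewrite Cmod_mult.
  pose proof (KB a z k Ha).
  assert (1 <= exp (2 * (2 * a * Cmod (z - RtoC (IZR k)) + a))).
  { rewrite <- exp_0. apply exp_le_exp. pose proof (Cmod_ge_0 (z - RtoC (IZR k))). nra. }
  pose proof (Cmod_ge_0 (c k)). pose proof (Cmod_ge_0 (Ek a k z)).
  assert (Cmod (Ek a k z) <= Kz a z * exp (- a * Rabs (IZR k))) by nra.
  rewrite Rmult_assoc. apply Rmult_le_compat; lra.
Qed.

Lemma rho_exp r : 0 <= r -> r <= exp r /\ r^2 <= 4 * exp r.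
Proof.
  intros Hr. pose proof (exp_ineq1_le r). pose proof (exp_ineq1_le (r/2)).
  assert (exp r = exp (r/2) * exp (r/2)) by (rewrite <- exp_plus; f_equal; field).
  split; nra.
Qed.

Lemma bound_tD a c z k L : 0 < a -> Cmod (c k) <= L ->
  Cmod (tD a c z k) <= (L * Kz a z) * exp (- a * Rabs (IZR k)).
Proof.
  intros Ha Hc. unfold tD. rewrite !Cmod_mult, !Cmod_RtoC.
  rewrite Rabs_left by lra. rewrite Rabs_pos_eq by lra.
  pose proof (KB a z k Ha).
  set (m := Cmod (z - RtoC (IZR k))) in *.
  assert (0 <= m) by apply Cmod_ge_0.
  set (r := 2 * a * m + a).
  destruct (rho_exp r) as [A _]; [unfold r; nra|].
  destruct (rho_exp (2*r)) as [A2 _]; [unfold r; nra|].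
  assert (exp r <= exp (2 * r)) by (apply exp_le_exp; unfold r; nra).
  pose proof (Cmod_ge_0 (c k)). pose proof (Cmod_ge_0 (Ek a k z)).
  assert (- - a * (2 * m) <= r) by (unfold r; lra).
  assert (- - a * (2 * m) <= exp (2 * r)) by lra.
  assert (X : - - a * (2 * m) * Cmod (Ek a k z) <= Kz a z * exp (- a * Rabs (IZR k))).
  { eapply Rle_trans; [|exact H]. rewrite Rmult_comm. apply Rmult_le_compat_l; [lra|]. unfold r in *; lra. }
  rewrite (Rmult_assoc (Cmod (c k))), (Rmult_assoc L).
  apply Rmult_le_compat; try lra.
  apply Rmult_le_pos; [nra|lra].
Qed.

Lemma bound_quad a c z h k L : 0 < a -> Cmod (c k) <= L -> Cmod h <= 1 ->
  Cmod (tF a c (z + h) k - tF a c z k - tD a c z k * h)%C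
    <= (L * (20 + a) * Kz a z * Cmod h ^ 2) * exp (- a * Rabs (IZR k)).
Proof.
  intros Ha Hc Hh.
  set (u := (z - RtoC (IZR k))%C).
  set (w := (RtoC (-a) * (RtoC 2 * u * h + h * h))%C).
  assert (HP : Pq a k (z + h)%C = (Pq a k z + w)%C) by (unfold w, u, Pq; ring).
  assert (HE : Ek a k (z + h)%C = (Ek a k z * cexp w)%C) by (unfold Ek; rewrite HP; apply cexp_add).
  assert (ID : (tF a c (z + h) k - tF a c z k - tD a c z k * h)%C =
               (c k * (Ek a k z * ((cexp w - 1 - w) + RtoC (-a) * h * h)))%C).
  { unfold tF, tD. rewrite HE. fold u. unfold w. ring. }
  rewrite ID, !Cmod_mult.
  pose proof (KB a z k Ha) as HK. fold u in HK.
  set (E := Cmod (Ek a k z)) in *. set (m := Cmod u) in *. set (hh := Cmod h) in *.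
  set (W := Cmod w).
  assert (H0E : 0 <= E) by apply Cmod_ge_0. assert (H0m : 0 <= m) by apply Cmod_ge_0.
  assert (H0h : 0 <= hh) by apply Cmod_ge_0. assert (H0W : 0 <= W) by apply Cmod_ge_0.
  set (r := 2 * a * m + a) in *.
  assert (Hr : 0 <= r) by (unfold r; nra).
  assert (HW : W <= hh * r).
  { unfold W, w. rewrite Cmod_mult, Cmod_RtoC, Rabs_left by lra.
    eapply Rle_trans. { apply Rmult_le_compat_l; [lra|]. apply Cmod_triangle. }
    rewrite !Cmod_mult, Cmod_RtoC, Rabs_pos_eq by lra. fold m hh.
    assert (hh * hh <= hh) by nra. unfold r. nra. }
  assert (HWr : W <= r) by nra.
  pose proof (cexp_quad w) as Hq. fold W in Hq.
  destruct (rho_exp r Hr) as [_ Hr2].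
  assert (HeW : exp W <= exp r) by (apply exp_le_exp; lra).
  assert (Hee : exp (2 * r) = exp r * exp r) by (rewrite <- exp_plus; f_equal; ring).
  assert (H1e : 1 <= exp (2 * r)) by (rewrite <- exp_0; apply exp_le_exp; lra).
  pose proof (exp_pos r) as Hpr. pose proof (exp_pos W) as HpW.
  assert (HW2 : W ^ 2 <= hh ^ 2 * r ^ 2) by (replace (hh^2 * r^2) with ((hh*r)^2) by ring; apply pow_incr; lra).
  assert (S1 : 5 * W ^ 2 * exp W <= 20 * hh ^ 2 * exp (2 * r)).
  { rewrite Hee.
    assert (W^2 * exp W <= (hh^2 * r^2) * exp r) by (apply Rmult_le_compat; try nra; lra).
    assert (hh^2 * r^2 * exp r <= hh^2 * (4 * exp r) * exp r).
    { apply Rmult_le_compat_r; [lra|]. apply Rmult_le_compat_l; [nra|lra]. }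
    nra. }
  assert (S2 : Cmod (RtoC (-a) * h * h)%C = a * hh ^ 2).
  { rewrite !Cmod_mult, Cmod_RtoC, Rabs_left by lra. fold hh. ring. }
  assert (Inner : Cmod ((cexp w - 1 - w) + RtoC (-a) * h * h)%C <= (20 + a) * hh ^ 2 * exp (2 * r)).
  { eapply Rle_trans; [apply Cmod_triangle|]. rewrite S2.
    assert (a * hh^2 <= a * hh^2 * exp (2*r)).
    { rewrite <- (Rmult_1_r (a * hh^2)) at 1. apply Rmult_le_compat_l; [nra|lra]. }
    nra. }
  assert (HK' : E * exp (2 * r) <= Kz a z * exp (- a * Rabs (IZR k))) by exact HK.
  pose proof (Cmod_ge_0 (c k)) as Hck.
  assert (Hin0 : 0 <= Cmod ((cexp w - 1 - w) + RtoC (-a) * h * h)%C) by apply Cmod_ge_0.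
  assert (T1 : E * Cmod ((cexp w - 1 - w) + RtoC (-a) * h * h)%C <= (20 + a) * hh^2 * (E * exp (2 * r))).
  { replace ((20 + a) * hh^2 * (E * exp (2 * r))) with (E * ((20 + a) * hh^2 * exp (2 * r))) by ring.
    apply Rmult_le_compat_l; lra. }
  assert (T2 : (20 + a) * hh^2 * (E * exp (2 * r)) <= (20 + a) * hh^2 * (Kz a z * exp (- a * Rabs (IZR k)))).
  { apply Rmult_le_compat_l; [nra|lra]. }
  replace (L * (20 + a) * Kz a z * hh ^ 2 * exp (- a * Rabs (IZR k)))
    with (L * ((20 + a) * hh^2 * (Kz a z * exp (- a * Rabs (IZR k))))) by ring.
  apply Rmult_le_compat; try lra. apply Rmult_le_pos; lra.
Qed.

Lemma Ek_unif a k x y : 0 < a ->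
  Cmod (Ek a k (x,y)) <= exp (a * y^2 + 2 * a) * exp (- a * Rabs (IZR (k - up x))).
Proof.
  intros Ha. rewrite Cmod_Ek, <- exp_plus. apply exp_le_exp.
  destruct (archimed x) as [U1 U2].
  rewrite minus_IZR.
  set (u := IZR (up x)) in *.
  assert (Hku : Rabs (IZR k - u) <= Rabs (x - IZR k) + 1).
  { replace (IZR k - u) with (- (x - IZR k) + (x - u)) by ring.
    eapply Rle_trans; [apply Rabs_triang|]. rewrite Rabs_Ropp.
    assert (Rabs (x - u) <= 1) by (unfold Rabs; destruct Rcase_abs; lra). lra. }
  set (s := Rabs (x - IZR k)) in *.
  assert (Hs : (x - IZR k)^2 = s^2) by (unfold s; rewrite <- (pow2_abs (x - IZR k)); reflexivity).
  rewrite Hs.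
  assert (s^2 - s + 1 >= 0) by (pose proof (pow2_ge_0 (s - 1/2)); nra).
  assert (a * (s^2 - s + 1) >= 0) by (apply Rle_ge, Rmult_le_pos; lra).
  assert (a * Rabs (IZR k - u) <= a * (s + 1)) by (apply Rmult_le_compat_l; lra).
  nra.
Qed.

Definition Bf a (s : Z) :=
  (if Z_le_dec 0 s then exp (- a * IZR s) else 1 + exp (- a) - exp (- a) * exp (a * IZR s)) / (1 - exp (- a)).

Lemma q_lt1 a : 0 < a -> exp (- a) < 1.
Proof. intros; rewrite <- exp_0; apply exp_increasing; lra. Qed.

Lemma Bf_step a s : 0 < a -> exp (- a * Rabs (IZR s)) + Bf a (s + 1) = Bf a s.
Proof.
  intros Ha. pose proof (q_lt1 a Ha). unfold Bf.
  rewrite plus_IZR.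
  destruct (Z_le_dec 0 s) as [H1|H1]; destruct (Z_le_dec 0 (s+1)) as [H2|H2]; try lia.
  - rewrite Rabs_pos_eq by (apply IZR_le; lia).
    replace (- a * (IZR s + 1)) with (- a * IZR s + - a) by ring. rewrite exp_plus.
    field. lra.
  - assert (IZR s < 0) by (apply IZR_lt; lia).
    rewrite Rabs_left by lra. assert (s = -1)%Z by lia. subst s.
    replace (- a * - IZR (-1)) with (-a) by (simpl; ring).
    replace (IZR (-1) + 1) with 0 by (simpl; ring). rewrite Rmult_0_r, exp_0.
    replace (a * IZR (-1)) with (-a) by (simpl; ring).
    field. lra.
  - assert (IZR s < 0) by (apply IZR_lt; lia).
    rewrite Rabs_left by lra.
    replace (a * (IZR s + 1)) with (a * IZR s + a) by ring. rewrite exp_plus.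
    replace (- a * - IZR s) with (a * IZR s) by ring.
    assert (exp (-a) * exp a = 1) by (rewrite <- exp_plus; replace (-a + a) with 0 by ring; apply exp_0).
    replace (exp (- a) * (exp (a * IZR s) * exp a)) with (exp (a * IZR s)) by
      (transitivity (exp (a * IZR s) * (exp (-a) * exp a)); [rewrite H3; ring| ring]).
    field. lra.
Qed.

Lemma Bf_bounds a s : 0 < a -> 0 <= Bf a s <= (1 + exp (- a)) / (1 - exp (- a)).
Proof.
  intros Ha. pose proof (q_lt1 a Ha) as Q1. pose proof (exp_pos (-a)) as Q2. unfold Bf.
  assert (Q3: 0 < 1 - exp (-a)) by lra.
  destruct (Z_le_dec 0 s) as [Hs|Hs].
  - assert (exp (- a * IZR s) <= 1).
    { rewrite <- exp_0. apply exp_le_exp. assert (0 <= IZR s) by (apply IZR_le; lia). nra. }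
    pose proof (exp_pos (- a * IZR s)).
    unfold Rdiv; split.
    + apply Rmult_le_pos; [lra | left; apply Rinv_0_lt_compat; lra].
    + apply Rmult_le_compat_r; [left; apply Rinv_0_lt_compat; lra | lra].
  - assert (exp (a * IZR s) <= 1).
    { rewrite <- exp_0. apply exp_le_exp. assert (IZR s <= 0) by (apply IZR_le; lia). nra. }
    pose proof (exp_pos (a * IZR s)).
    assert (exp (-a) * exp (a * IZR s) <= exp (-a)) by nra.
    assert (0 <= exp (-a) * exp (a * IZR s)) by nra.
    unfold Rdiv; split.
    + apply Rmult_le_pos; [lra | left; apply Rinv_0_lt_compat; lra].
    + apply Rmult_le_compat_r; [left; apply Rinv_0_lt_compat; lra | lra].
Qed.

Lemma window a : 0 < a -> forall M s,
  sum_n_m (fun j : nat => exp (- a * Rabs (IZR (Z.of_nat j + s)))) 0 M <= Bf a s.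
Proof.
  intros Ha M. induction M as [|M IH]; intros s.
  - rewrite sum_n_n. simpl Z.of_nat. rewrite Z.add_0_l.
    rewrite <- (Bf_step a s Ha). pose proof (Bf_bounds a (s+1) Ha). lra.
  - rewrite sum_Sn_m by lia. rewrite <- sum_n_m_S.
    rewrite (sum_n_m_ext _ (fun j : nat => exp (- a * Rabs (IZR (Z.of_nat j + (s + 1)))))).
    2: { intros j. f_equal. f_equal. f_equal. f_equal. lia. }
    specialize (IH (s + 1)%Z).
    rewrite <- (Bf_step a s Ha). simpl Z.of_nat. rewrite Z.add_0_l.
    change (@plus R_AbelianMonoid) with Rplus. lra.
Qed.

Lemma Cmod_sum_n_m (f : nat -> C) n m : Cmod (sum_n_m f n m) <= sum_n_m (fun j => Cmod (f j)) n m.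
Proof. exact (norm_sum_n_m (K := C_AbsRing) (V := C_NormedModule) f n m). Qed.

Lemma sum_n_m_mult_l_R (K : R) (f : nat -> R) n m :
  sum_n_m (fun j => K * f j) n m = K * sum_n_m f n m.
Proof. exact (sum_n_m_mult_l (K := R_Ring) K f n m). Qed.

Lemma main_partial a c L x y N : 0 < a -> (forall k, Cmod (c k) <= L) ->
  Cmod (sum_n (Tsym (tF a c (x,y))) N)
    <= exp (2 * a) * ((1 + exp (- a)) / (1 - exp (- a))) * L * exp (a * y ^ 2).
Proof.
  intros Ha Hc.
  rewrite <- sym_sum.
  eapply Rle_trans; [apply Cmod_sum_n_m|].
  eapply Rle_trans.
  { apply (sum_n_m_le _ (fun j : nat => (L * exp (a * y^2 + 2 * a)) *
        exp (- a * Rabs (IZR (Z.of_nat j + (- Z.of_nat N - up x)))))).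
    intros j. unfold tF. rewrite Cmod_mult.
    replace (Z.of_nat j + (- Z.of_nat N - up x))%Z with ((Z.of_nat j - Z.of_nat N) - up x)%Z by lia.
    rewrite Rmult_assoc. apply Rmult_le_compat.
    - apply Cmod_ge_0.
    - apply Cmod_ge_0.
    - apply Hc.
    - apply Ek_unif; exact Ha. }
  rewrite sum_n_m_mult_l_R.
  pose proof (window a Ha (2 * N) (- Z.of_nat N - up x)%Z) as HW.
  pose proof (Bf_bounds a (- Z.of_nat N - up x)%Z Ha) as HB.
  assert (HL : 0 <= L) by (pose proof (Hc 0%Z); pose proof (Cmod_ge_0 (c 0%Z)); lra).
  assert (HE : exp (a * y^2 + 2 * a) = exp (2 * a) * exp (a * y^2)) by (rewrite <- exp_plus; f_equal; ring).
  rewrite HE.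
  pose proof (exp_pos (2 * a)). pose proof (exp_pos (a * y^2)).
  assert (0 <= L * (exp (2 * a) * exp (a * y ^ 2))) by (apply Rmult_le_pos; [lra| apply Rmult_le_pos; lra]).
  set (S := sum_n_m _ 0 (2 * N)) in *.
  assert (S <= (1 + exp (- a)) / (1 - exp (- a))) by lra.
  replace (exp (2 * a) * ((1 + exp (- a)) / (1 - exp (- a))) * L * exp (a * y ^ 2))
    with (L * (exp (2 * a) * exp (a * y ^ 2)) * ((1 + exp (- a)) / (1 - exp (- a)))) by ring.
  apply Rmult_le_compat_l; assumption.
Qed.

Lemma linf_le c : linf_bounded c -> forall k, Cmod (c k) <= linf_norm c.
Proof.
  intros [M HM] k. unfold linf_norm.
  destruct (Lub_Rbar_correct (fun r => exists k : Z, r = Cmod (c k))) as [Hub Hleast].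
  destruct (Lub_Rbar (fun r => exists k : Z, r = Cmod (c k))) as [r| |] eqn:E.
  - simpl. apply (Hub (Cmod (c k))). exists k; reflexivity.
  - exfalso. assert (Hu : is_ub_Rbar (fun r => exists k : Z, r = Cmod (c k)) (Finite M)).
    { intros r [j ->]. simpl. apply HM. }
    specialize (Hleast _ Hu). simpl in Hleast. exact Hleast.
  - exfalso. specialize (Hub (Cmod (c k)) (ex_intro _ k eq_refl)). simpl in Hub. exact Hub.
Qed.

Lemma sum_geom_le q N : 0 <= q < 1 -> sum_n (fun n => q ^ n) N <= 1 / (1 - q).
Proof.
  intros Hq.
  assert (E : sum_n (fun n => q ^ n) N * (1 - q) = 1 - q ^ (S N)).
  { induction N as [|N IH].
    - rewrite sum_O. simpl. ring.
    - rewrite sum_Sn. change (@plus R_AbelianMonoid) with Rplus.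
      rewrite Rmult_plus_distr_r, IH. simpl. ring. }
  assert (0 <= q ^ S N) by (apply pow_le; lra).
  apply (Rmult_le_reg_r (1 - q)); [lra|]. rewrite E. field_simplify; lra.
Qed.

Lemma Tsym_lin (t1 t2 t3 : Z -> C) (h : C) N :
  (sum_n (Tsym t1) N - sum_n (Tsym t2) N - h * sum_n (Tsym t3) N)%C
  = sum_n (Tsym (fun k => t1 k - t2 k - t3 k * h)%C) N.
Proof.
  induction N as [|N IH].
  - rewrite !sum_O. simpl. ring.
  - rewrite !sum_Sn. change (@plus C_AbelianMonoid) with Cplus. rewrite <- IH.
    unfold Tsym. change (@plus C_AbelianMonoid) with Cplus. ring.
Qed.

Lemma sum_Tsym_bound (t : Z -> C) a B N : 0 < a ->
  (forall k, Cmod (t k) <= B * exp (- a * Rabs (IZR k))) ->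
  Cmod (sum_n (Tsym t) N) <= 2 * B / (1 - exp (- a)).
Proof.
  intros Ha H.
  pose proof (Tsym_bound a B t H) as HT.
  assert (HB : 0 <= B).
  { specialize (H 0%Z). rewrite Rabs_R0, Rmult_0_r, exp_0, Rmult_1_r in H.
    pose proof (Cmod_ge_0 (t 0%Z)). lra. }
  unfold sum_n.
  eapply Rle_trans; [apply Cmod_sum_n_m|].
  eapply Rle_trans; [apply (sum_n_m_le _ (fun n => 2 * B * exp (- a) ^ n)); exact HT|].
  rewrite sum_n_m_mult_l_R.
  pose proof (q_lt1 a Ha). pose proof (exp_pos (-a)).
  pose proof (sum_geom_le (exp (-a)) N) as G. unfold sum_n in G.
  replace (2 * B / (1 - exp (- a))) with (2 * B * (1 / (1 - exp (-a)))) by (field; lra).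
  apply Rmult_le_compat_l; [lra|]. apply G; lra.
Qed.

Lemma Ek_real a k x : Ek a k (RtoC x) = RtoC (phi a (x - IZR k)).
Proof.
  unfold Ek, phi.
  replace (Pq a k (RtoC x)) with ((- a * (x - IZR k) ^ 2), 0)
    by (unfold Pq, RtoC, Cminus, Cplus, Copp, Cmult; simpl; f_equal; ring).
  apply cexp_R.
Qed.

Theorem lemma4p1 (a : R) (ha : 0 < a) :
  exists Cst : R, 0 < Cst /\
    forall c : Z -> C, linf_bounded c ->
      exists F : C -> C,
        entire F /\
        (forall x : R, gauss_series_value a c x (F (RtoC x))) /\
        (forall x y : R, Cmod (F (x, y)) <= Cst * linf_norm c * exp (a * y ^ 2)).
Proof.
  pose proof (q_lt1 a ha) as Hq. pose proof (exp_pos (-a)) as Hq0.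
  exists (exp (2 * a) * ((1 + exp (- a)) / (1 - exp (- a)))).
  split.
  { apply Rmult_lt_0_compat; [apply exp_pos|]. apply Rdiv_lt_0_compat; lra. }
  intros c Hc.
  pose proof (linf_le c Hc) as HL. set (L := linf_norm c) in *.
  set (F := fun z => climit (fun N => sum_n (Tsym (tF a c z)) N)).
  set (D := fun z => climit (fun N => sum_n (Tsym (tD a c z)) N)).
  assert (ConvF : forall z, cconv (fun N => sum_n (Tsym (tF a c z)) N) (F z)).
  { intros z. apply (conv_Tsym a (L * Kz a z)); [exact ha|]. intros k. apply bound_tF; auto. }
  assert (ConvD : forall z, cconv (fun N => sum_n (Tsym (tD a c z)) N) (D z)).
  { intros z. apply (conv_Tsym a (L * Kz a z)); [exact ha|]. intros k. apply bound_tD; auto. }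
  exists F. split; [|split].
  -
    intros z0. exists (D z0).
    set (Kd := 2 * (L * (20 + a) * Kz a z0) / (1 - exp (- a))).
    assert (HL0 : 0 <= L) by (pose proof (HL 0%Z); pose proof (Cmod_ge_0 (c 0%Z)); lra).
    assert (HKd : 0 <= Kd).
    { unfold Kd. apply Rmult_le_pos.
      - pose proof (exp_pos (a * snd z0 ^ 2 + 4 * a * Rabs (snd z0) + 9 * a + a * Rabs (fst z0))).
        unfold Kz. apply Rmult_le_pos; [lra|]. apply Rmult_le_pos; [|lra]. apply Rmult_le_pos; lra.
      - left. apply Rinv_0_lt_compat. lra. }
    assert (QB : forall h, Cmod h <= 1 -> Cmod (F (z0 + h) - F z0 - h * D z0)%C <= Kd * Cmod h ^ 2).
    { intros h Hh.
      apply (cconv_le (fun N => (sum_n (Tsym (tF a c (z0 + h))) N - sum_n (Tsym (tF a c z0)) N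
                                 - h * sum_n (Tsym (tD a c z0)) N)%C)).
      - apply cconv_minus; [apply cconv_minus; apply ConvF|]. apply cconv_scal. apply ConvD.
      - intros N. rewrite Tsym_lin.
        eapply Rle_trans.
        { apply (sum_Tsym_bound _ a (L * (20 + a) * Kz a z0 * Cmod h ^ 2)); [exact ha|].
          intros k. apply bound_quad; auto. }
        unfold Kd. right. field. lra. }
    split; [apply is_linear_scal_l|].
    intros x Hx. apply (is_filter_lim_locally_unique (K:=C_AbsRing) (V:=AbsRing_NormedModule C_AbsRing)) in Hx. subst x.
    intros eps.
    set (Kp := Kd + 1).
    assert (HKp : 0 < Kp) by (unfold Kp; lra).
    assert (Hd : 0 < Rmin 1 (eps / Kp)).
    { apply Rmin_pos; [lra|]. apply Rdiv_lt_0_compat; [apply cond_pos|exact HKp]. }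
    exists (mkposreal _ Hd). intros y0 Hy. set (y := (y0 : C)) in *.
    assert (Hy2 : Cmod (y - z0)%C < Rmin 1 (eps / Kp)) by exact Hy.
    set (h := (y - z0)%C) in *.
    assert (Hy' : y = (z0 + h)%C) by (unfold h; ring).
    assert (Hh1 : Cmod h <= 1) by (pose proof (Rmin_l 1 (eps / Kp)); lra).
    assert (Hh2 : Cmod h <= eps / Kp) by (pose proof (Rmin_r 1 (eps / Kp)); lra).
    specialize (QB h Hh1).
    change (Cmod (F y - F z0 - h * D z0)%C <= eps * Cmod h).
    rewrite Hy'.
    eapply Rle_trans; [exact QB|].
    pose proof (Cmod_ge_0 h).
    assert (Kp * Cmod h <= eps).
    { apply (Rmult_le_reg_r (/ Kp)); [apply Rinv_0_lt_compat; lra|].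
      replace (Kp * Cmod h * / Kp) with (Cmod h) by (field; lra). exact Hh2. }
    assert (Kd * Cmod h ^ 2 <= Kp * Cmod h * Cmod h).
    { unfold Kp. simpl. nra. }
    nra.
  -
    intros x. unfold gauss_series_value.
    apply (filterlim_ext (fun N => sum_n (Tsym (tF a c (RtoC x))) N)); [|apply ConvF].
    intros N. unfold gauss_partial. rewrite <- sym_sum. apply sum_n_m_ext. intros j.
    unfold tF. rewrite Ek_real. reflexivity.
  -
    intros x y. apply (cconv_le _ _ _ (ConvF (x, y))). intros N.
    apply main_partial; auto.
Qed.
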